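(* Let $\mathcal M=(M,<,+,0,\ldots)$ be a definably complete locally o-minimal expansion of an ordered group. Let $(G,\tau)$ be a definable topological group which is definably simple, and which, as a definable topological space, is regular, Hausdorff and definably compact. Then $(G,\tau)$ is either discrete or definably connected in the topology $\tau$.
   Context: ''Definable'' means definable in $\mathcal M$ with parameters. $\mathcal M$ is an expansion of an ordered group $(M,<,+,0)$ whose order is dense without endpoints. It is locally o-minimal if for every definable $X\subseteq M$ and every $a\in M$ there is an open interval $I\ni a$ such that $X\cap I$ is a finite union of points and open intervals; it is definably complete if every definable subset of $M$ has a supremum and an infimum in $M\cup\{\pm\infty\}$. A family $\{S_t: t\in T\}$ of sets is definable if $T$ and $\bigcup_{t\in T}\{t\}\times S_t$ are definable. A definable topological space is a definable set $X$ with a topology admitting a definable family of sets as an open base. A family $\mathcal F$ of sets is filtered if for $B_1,B_2\in\mathcal F$ there is $B_3\in\mathcal F$ with $B_3\subseteq B_1\cap B_2$. A definable topological space is definably compact if every definable filtered family of nonempty closed subsets has nonempty intersection. A definable group is a group whose underlying set and multiplication are definable; a definable topological group is a definable group with a definable topology in which multiplication and inversion are continuous. It is definably simple if it has no nontrivial definable normal subgroup. A definable set is definably connected (in a definable topology) if it has no definable subset, other than the empty set and itself, that is both open and closed. *)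

(* Defs.v *)
From mathcomp Require Import all_boot.
From Stdlib Require List.

Set Implicit Arguments.
Unset Strict Implicit.
Unset Printing Implicit Defensive.

(* Points of M^n are functions 'I_n -> M. *)
Section Tuples.
Variable M : Type.
Definition tcat m n (x : 'I_m -> M) (y : 'I_n -> M) : 'I_(m + n) -> M :=
  fun i => match split i with inl j => x j | inr k => y k end.
Definition lpart m n (z : 'I_(m + n) -> M) : 'I_m -> M := fun i => z (lshift n i).
Definition rpart m n (z : 'I_(m + n) -> M) : 'I_n -> M := fun i => z (rshift m i).
Definition tsingle (a : M) : 'I_1 -> M := fun _ => a.
End Tuples.

(* The "..." is encoded by the collection [Def n] of the
   subsets of M^n that are definable (with parameters), axiomatized as a
   structure in the sense of van den Dries (Tame topology, Ch. 1, §2):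
   boolean algebras, closed under products with M, containing diagonals,
   closed under projection, containing the graphs of < and +, and the
   singletons (parameters). *)
Record expansion := Expansion {
  car :> Type;
  lt : car -> car -> Prop;
  add : car -> car -> car;
  opp : car -> car;
  zero : car;
  addA : forall x y z, add x (add y z) = add (add x y) z;
  add0r : forall x, add zero x = x;
  addr0 : forall x, add x zero = x;
  addNr : forall x, add (opp x) x = zero;
  addrN : forall x, add x (opp x) = zero;
  lt_irrefl : forall x, ~ lt x x;
  lt_trans : forall x y z, lt x y -> lt y z -> lt x z;
  lt_total : forall x y, lt x y \/ x = y \/ lt y x;
  lt_addl : forall x y z, lt x y -> lt (add z x) (add z y);
  lt_addr : forall x y z, lt x y -> lt (add x z) (add y z);
  lt_dense : forall x y, lt x y -> exists z, lt x z /\ lt z y;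
  no_max : forall x, exists y, lt x y;
  no_min : forall x, exists y, lt y x;
  Def : forall n : nat, (('I_n -> car) -> Prop) -> Prop;
  Def_compl : forall n A, Def A -> Def (fun x : 'I_n -> car => ~ A x);
  Def_union : forall n A B, Def A -> Def B ->
     Def (fun x : 'I_n -> car => A x \/ B x);
  Def_prodr : forall n A, Def A ->
     Def (fun z : 'I_(n + 1) -> car => A (lpart z));
  Def_prodl : forall n A, Def A ->
     Def (fun z : 'I_(1 + n) -> car => A (rpart z));
  Def_diag : forall n (i j : 'I_n), Def (fun x : 'I_n -> car => x i = x j);
  Def_proj : forall n (A : ('I_(n + 1) -> car) -> Prop), Def A ->
     Def (fun x : 'I_n -> car => exists y, A (tcat x (tsingle y)));
  Def_lt : Def (fun x : 'I_2 -> car => lt (x ord0) (x ord_max));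
  Def_add : Def (fun x : 'I_3 -> car =>
     add (x ord0) (x (inord 1)) = x ord_max);
  Def_point : forall a : car, Def (fun x : 'I_1 -> car => x ord0 = a)
}.

Section Notions.
Variable M : expansion.
Local Notation pt n := ('I_n -> car M).

Definition Def1 (X : M -> Prop) := Def (fun x : pt 1 => X (x ord0)).

Definition finite_union_points_intervals (X : M -> Prop) (I : M -> Prop) :=
  exists (ps : list M) (ivs : list (M * M)),
    forall x, I x ->
      (X x <-> (List.In x ps \/ exists bc, List.In bc ivs /\ lt bc.1 x /\ lt x bc.2)).

Definition locally_o_minimal :=
  forall X : M -> Prop, Def1 X -> forall a : M,
    exists b c, lt b a /\ lt a c /\
      finite_union_points_intervals X (fun x => lt b x /\ lt x c).

(* definable completeness: sup and inf exist in M \cup {-oo,+oo} *)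
Definition is_lub (X : M -> Prop) (s : M) :=
  (forall x, X x -> ~ lt s x) /\ (forall b, (forall x, X x -> ~ lt b x) -> ~ lt b s).
Definition is_glb (X : M -> Prop) (s : M) :=
  (forall x, X x -> ~ lt x s) /\ (forall b, (forall x, X x -> ~ lt x b) -> ~ lt s b).
Definition has_sup_ext (X : M -> Prop) :=
  (exists s, is_lub X s) \/ (forall b, exists x, X x /\ lt b x) \/ (forall x, ~ X x).
Definition has_inf_ext (X : M -> Prop) :=
  (exists s, is_glb X s) \/ (forall b, exists x, X x /\ lt x b) \/ (forall x, ~ X x).
Definition definably_complete :=
  forall X : M -> Prop, Def1 X -> has_sup_ext X /\ has_inf_ext X.

Definition def_family m n (T : pt m -> Prop) (S : pt m -> pt n -> Prop) :=
  Def T /\ Def (fun z : pt (m + n) => T (lpart z) /\ S (lpart z) (rpart z)).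

(* Topology on X ⊆ M^n generated by a family of basic open sets B_t (t in T). *)
Section Top.
Variables (n m : nat) (X : pt n -> Prop) (T : pt m -> Prop) (B : pt m -> pt n -> Prop).

Definition is_open_base :=
  (forall t x, T t -> B t x -> X x) /\
  (forall x, X x -> exists t, T t /\ B t x) /\
  (forall s t x, T s -> T t -> B s x -> B t x ->
     exists u, T u /\ B u x /\ forall y, B u y -> B s y /\ B t y).

Definition topen (U : pt n -> Prop) :=
  (forall x, U x -> X x) /\
  forall x, U x -> exists t, T t /\ B t x /\ forall y, B t y -> U y.

Definition tclosed (C : pt n -> Prop) :=
  (forall x, C x -> X x) /\ topen (fun x => X x /\ ~ C x).

Definition def_top_space := Def X /\ def_family T B /\ is_open_base.

Definition hausdorff :=
  forall x y, X x -> X y -> x <> y ->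
    exists U V, topen U /\ topen V /\ U x /\ V y /\ forall z, ~ (U z /\ V z).

Definition regular :=
  forall x C, X x -> tclosed C -> ~ C x ->
    exists U V, topen U /\ topen V /\ U x /\ (forall z, C z -> V z) /\
      forall z, ~ (U z /\ V z).

Definition definably_compact :=
  forall k (I : pt k -> Prop) (F : pt k -> pt n -> Prop),
    def_family I F ->
    (forall i, I i -> tclosed (F i)) ->
    (forall i, I i -> exists x, F i x) ->
    (forall i j, I i -> I j -> exists l, I l /\ forall x, F l x -> F i x /\ F j x) ->
    exists x, forall i, I i -> F i x.

Definition discrete := forall x, X x -> topen (fun y => y = x).

Definition definably_connected :=
  forall Y : pt n -> Prop, Def Y -> (forall x, Y x -> X x) -> topen Y -> tclosed Y ->
    (forall x, ~ Y x) \/ (forall x, X x -> Y x).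
End Top.

Section Group.
Variables (n : nat) (G : pt n -> Prop) (mul : pt n -> pt n -> pt n)
  (e : pt n) (inv : pt n -> pt n).

Definition is_group :=
  G e /\ (forall x y, G x -> G y -> G (mul x y)) /\ (forall x, G x -> G (inv x)) /\
  (forall x y z, G x -> G y -> G z -> mul x (mul y z) = mul (mul x y) z) /\
  (forall x, G x -> mul e x = x /\ mul x e = x) /\
  (forall x, G x -> mul (inv x) x = e /\ mul x (inv x) = e).

Definition def_group :=
  is_group /\ Def G /\
  Def (fun w : pt (n + n + n) =>
         G (lpart (lpart w)) /\ G (rpart (lpart w)) /\
         rpart w = mul (lpart (lpart w)) (rpart (lpart w))).

Definition normal_subgroup (H : pt n -> Prop) :=
  (forall x, H x -> G x) /\ H e /\
  (forall x y, H x -> H y -> H (mul x y)) /\ (forall x, H x -> H (inv x)) /\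
  (forall g x, G g -> H x -> H (mul (mul g x) (inv g))).

Definition definably_simple :=
  forall H, Def H -> normal_subgroup H ->
    (forall x, H x -> x = e) \/ (forall x, G x -> H x).

Definition def_top_group m (T : pt m -> Prop) (B : pt m -> pt n -> Prop) :=
  def_group /\ def_top_space G T B /\
  (forall x y W, G x -> G y -> topen G T B W -> W (mul x y) ->
     exists U V, topen G T B U /\ topen G T B V /\ U x /\ V y /\
       forall u v, U u -> V v -> W (mul u v)) /\
  (forall x W, G x -> topen G T B W -> W (inv x) ->
     exists U, topen G T B U /\ U x /\ forall u, U u -> W (inv u)).
End Group.
End Notions.

(* Main.v *)
Require Import Defs.
From mathcomp Require Import all_boot.
From mathcomp Require Import zify.
From Stdlib Require Import FunctionalExtensionality PropExtensionality Classical.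

Set Implicit Arguments.
Unset Strict Implicit.
Unset Printing Implicit Defensive.


Section Infra.
Variable M : expansion.
Local Notation pt n := ('I_n -> car M).

Lemma Def_ext n (A B : pt n -> Prop) : Def A -> (forall x, A x <-> B x) -> Def B.
Proof.
move=> hA hAB; have -> : B = A; last by [].
apply: functional_extensionality => x; apply: propositional_extensionality.
by split => /hAB.
Qed.

Lemma Def_and n (A B : pt n -> Prop) : Def A -> Def B -> Def (fun x => A x /\ B x).
Proof.
move=> hA hB; apply: (Def_ext (Def_compl (Def_union (Def_compl hA) (Def_compl hB)))).
move=> x; split; first by move=> h; split; apply: NNPP => h'; apply: h; tauto.
by case=> h1 h2 [].
Qed.

Lemma Def_or n (A B : pt n -> Prop) : Def A -> Def B -> Def (fun x => A x \/ B x).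
Proof. exact: Def_union. Qed.

Lemma Def_not n (A : pt n -> Prop) : Def A -> Def (fun x => ~ A x).
Proof. exact: Def_compl. Qed.

Lemma Def_impl n (A B : pt n -> Prop) : Def A -> Def B -> Def (fun x => A x -> B x).
Proof.
move=> hA hB; apply: (Def_ext (Def_union (Def_compl hA) hB)) => x.
split; first by case=> h // /h.
by move=> h; case: (classic (A x)) => ha; [right; apply: h|left].
Qed.

Lemma Def_iff n (A B : pt n -> Prop) : Def A -> Def B -> Def (fun x => A x <-> B x).
Proof.
move=> hA hB; apply: (Def_ext (Def_and (Def_impl hA hB) (Def_impl hB hA))) => x.
by split; case.
Qed.

Lemma Def_cast n n' (h : n = n') (A : pt n -> Prop) :
  Def A -> Def (fun x : pt n' => A (fun i => x (cast_ord h i))).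
Proof.
subst n'=> hA; apply: (Def_ext hA) => x.
have -> : (fun i => x (cast_ord (erefl n) i)) = x.
  by apply: functional_extensionality => i; rewrite cast_ord_id.
by [].
Qed.

Lemma ffeq n (x : pt n) (i j : 'I_n) : val i = val j -> x i = x j.
Proof. by move=> h; congr x; apply: val_inj. Qed.

Lemma prodl_iter j k (A : pt k -> Prop) :
  Def A -> Def (fun z : pt (j + k) => A (rpart z)).
Proof.
move=> hA; elim: j => [|j IH].
  have h : k = 0 + k by [].
  apply: (Def_ext (Def_cast h hA)) => z.
  have -> : (fun i => z (cast_ord h i)) = rpart z.
    by apply: functional_extensionality => i; rewrite /rpart /lpart; apply: ffeq.
  by [].
have h : 1 + (j + k) = j.+1 + k by rewrite addnA.
apply: (Def_ext (Def_cast h (Def_prodl IH))) => z.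
have -> : rpart (rpart (fun i => z (cast_ord h i))) = rpart z.
  by apply: functional_extensionality => i; rewrite /rpart; apply: ffeq => /=; lia.
by [].
Qed.

Lemma Def_true0 : Def (fun _ : pt 0 => True).
Proof.
have i0 : 'I_(0 + 1) by exact: (Ordinal (ltn0Sn 0)).
have := @Def_proj M 0 (fun x => x i0 = x i0) (Def_diag M i0 i0).
move=> h; apply: (Def_ext h) => x.
by split => // _; exists (zero M).
Qed.

Lemma Def_true N : Def (fun _ : pt N => True).
Proof.
have h : N + 0 = N by rewrite addn0.
by apply: (Def_ext (Def_cast h (prodl_iter N Def_true0))).
Qed.

Lemma Def_bigand N k (P : 'I_k -> pt N -> Prop) :
  (forall i, Def (P i)) -> Def (fun x => forall i, P i x).
Proof.
move=> hP.
have H : forall s : seq 'I_k, Def (fun x => forall i, i \in s -> P i x).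
  elim=> [|y s IH].
    by apply: (Def_ext (Def_true N)) => x; split => // _ i.
  apply: (Def_ext (Def_and (hP y) IH)) => x; split.
    by case=> h1 h2 i; rewrite in_cons => /orP [/eqP ->|/h2].
  move=> h; split; first by apply: h; rewrite in_cons eqxx.
  by move=> i hi; apply: h; rewrite in_cons hi orbT.
apply: (Def_ext (H (enum 'I_k))) => x; split=> h i; first by apply: h; rewrite mem_enum.
by move=> _; apply: h.
Qed.

Lemma pt0_eq (x y : pt 0) : x = y.
Proof. by apply: functional_extensionality => -[]. Qed.

Definition snoc k (y : pt k) (a : M) : pt k.+1 :=
  fun i => tcat y (tsingle a) (cast_ord (esym (addn1 k)) i).

Lemma Def_ex N k (P : pt N -> pt k -> Prop) :
  Def (fun v : pt (N + k) => P (lpart v) (rpart v)) ->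
  Def (fun z => exists x, P z x).
Proof.
elim: k N P => [|k IH] N P hP.
  have h : N + 0 = N by rewrite addn0.
  apply: (Def_ext (Def_cast h hP)) => z.
  have -> : lpart (fun i => z (cast_ord h i)) = z.
    by apply: functional_extensionality => i; rewrite /rpart /lpart; apply: ffeq.
  split; last by case=> x; rewrite (pt0_eq x (rpart (fun i => z (cast_ord h i)))).
  by move=> hz; eexists; apply: hz.
have h : N + k.+1 = (N + k) + 1 by rewrite addn1 addnS.
have := Def_proj (Def_cast h hP).
set c := cast_ord h.
move=> hP2.
have hP3 : Def (fun u : pt (N + k) =>
   (fun z y => exists a, P z (snoc y a)) (lpart u) (rpart u)).
  apply: (Def_ext hP2) => u /=.
  have E1 : forall a, lpart (fun i => tcat u (tsingle a) (c i)) = lpart u.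
    move=> a; apply: functional_extensionality => i.
    rewrite /lpart /tcat; case: splitP => [j hj|j hj]; last first.
      by move: hj; rewrite /= => hj; have := ltn_ord i; lia.
    by apply: ffeq; move: hj => /=; lia.
  have E2 : forall a, rpart (fun i => tcat u (tsingle a) (c i)) = snoc (rpart u) a.
    move=> a; apply: functional_extensionality => i.
    rewrite /rpart {1}/tcat; case: (splitP (c (rshift N i))) => [j hj|j hj] /=.
      rewrite /snoc /tcat; case: (splitP (cast_ord (esym (addn1 k)) i)) => [j' hj'|j' hj'] /=.
        by apply: ffeq; move: hj hj' => /=; lia.
      by move: hj hj' => /=; have := ltn_ord j; have := ltn_ord j'; lia.
    rewrite /snoc /tcat; case: (splitP (cast_ord (esym (addn1 k)) i)) => [j' hj'|j' hj'] /=.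
      by move: hj hj' => /=; have := ltn_ord j; have := ltn_ord j'; have := ltn_ord i; lia.
    by [].
  by split; case=> a ha; exists a; move: ha; rewrite E1 E2.
apply: (Def_ext (IH N (fun z y => exists a, P z (snoc y a)) hP3)) => z /=; split.
  by case=> y /= [a ha]; exists (snoc y a).
case=> x hx; exists (fun j => x (widen_ord (leqnSn k) j)); exists (x ord_max).
have -> : snoc (fun j => x (widen_ord (leqnSn k) j)) (x ord_max) = x; last by [].
apply: functional_extensionality => i; rewrite /snoc /tcat.
case: splitP => [j hj|j hj]; rewrite /tsingle; apply: ffeq; move: hj => /=.
  by [].
by have := ltn_ord j; have := ltn_ord i; lia.
Qed.

Lemma Def_all N k (P : pt N -> pt k -> Prop) :
  Def (fun v : pt (N + k) => P (lpart v) (rpart v)) ->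
  Def (fun z => forall x, P z x).
Proof.
move=> hP; have := Def_not (Def_ex (P := fun z x => ~ P z x) (Def_not hP)).
move=> h; apply: (Def_ext h) => z; split.
  by move=> hn x; apply: NNPP => hx; apply: hn; exists x.
by move=> hx [x]; apply.
Qed.

Lemma Def_reindex N k (f : 'I_k -> 'I_N) (A : pt k -> Prop) :
  Def A -> Def (fun z : pt N => A (fun i => z (f i))).
Proof.
move=> hA.
have h : Def (fun z : pt N => exists y, A y /\ forall i, y i = z (f i)).
  apply: (Def_ex (P := fun z y => A y /\ forall i, y i = z (f i))).
  apply: Def_and; first exact: prodl_iter.
  by apply: Def_bigand => i; apply: (Def_diag M).
apply: (Def_ext h) => z; split; last by move=> hz; exists (fun i => z (f i)).
case=> y [hy e]; have <- : y = (fun i => z (f i)); last by [].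
by apply: functional_extensionality.
Qed.

Lemma tcatL a b X (f : 'I_a -> X) (g : 'I_b -> X) i : tcat f g (lshift b i) = f i.
Proof. by rewrite /tcat (unsplitK (inl i : 'I_a + 'I_b)). Qed.
Lemma tcatR a b X (f : 'I_a -> X) (g : 'I_b -> X) i : tcat f g (rshift a i) = g i.
Proof. by rewrite /tcat (unsplitK (inr i : 'I_a + 'I_b)). Qed.

Lemma Def_app1 N a (A : pt a -> Prop) (f : 'I_a -> 'I_N) :
  Def A -> Def (fun v : pt N => A (fun i => v (f i))).
Proof. exact: Def_reindex. Qed.

Lemma Def_app2 N a b (P : pt a -> pt b -> Prop) (f : 'I_a -> 'I_N) (g : 'I_b -> 'I_N) :
  Def (fun w : pt (a + b) => P (lpart w) (rpart w)) ->
  Def (fun v : pt N => P (fun i => v (f i)) (fun i => v (g i))).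
Proof.
move=> hP; have := Def_reindex (tcat f g) hP.
move=> h; apply: (Def_ext h) => v.
rewrite /lpart /rpart.
have -> : (fun i => v (tcat f g (lshift b i))) = (fun i => v (f i)).
  by apply: functional_extensionality => i; rewrite tcatL.
have -> : (fun i => v (tcat f g (rshift a i))) = (fun i => v (g i)).
  by apply: functional_extensionality => i; rewrite tcatR.
by [].
Qed.

Lemma Def_app3 N a b c (P : pt a -> pt b -> pt c -> Prop)
  (f : 'I_a -> 'I_N) (g : 'I_b -> 'I_N) (h : 'I_c -> 'I_N) :
  Def (fun w : pt (a + b + c) => P (lpart (lpart w)) (rpart (lpart w)) (rpart w)) ->
  Def (fun v : pt N => P (fun i => v (f i)) (fun i => v (g i)) (fun i => v (h i))).
Proof.
move=> hP; have := Def_reindex (tcat (tcat f g) h) hP.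
move=> H; apply: (Def_ext H) => v.
rewrite /lpart /rpart.
have -> : (fun i => v (tcat (tcat f g) h (lshift c (lshift b i)))) = (fun i => v (f i)).
  by apply: functional_extensionality => i; rewrite tcatL tcatL.
have -> : (fun i => v (tcat (tcat f g) h (lshift c (rshift a i)))) = (fun i => v (g i)).
  by apply: functional_extensionality => i; rewrite tcatL tcatR.
have -> : (fun i => v (tcat (tcat f g) h (rshift (a + b) i))) = (fun i => v (h i)).
  by apply: functional_extensionality => i; rewrite tcatR.
by [].
Qed.

Lemma Def_eqc N k (f : 'I_k -> 'I_N) (c : pt k) :
  Def (fun v : pt N => forall i, v (f i) = c i).
Proof.
apply: Def_bigand => i.
exact: (Def_reindex (fun _ : 'I_1 => f i) (Def_point (c i))).
Qed.

End Infra.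

Section Main.
Variables (M : expansion) (n m : nat).
Local Notation pt n := ('I_n -> car M).
Variables (G : pt n -> Prop) (mul : pt n -> pt n -> pt n) (e : pt n) (inv : pt n -> pt n)
  (T : pt m -> Prop) (B : pt m -> pt n -> Prop).

Definition GB2 s y := T s /\ B s y.
Definition MG3 x y p := G x /\ G y /\ p = mul x y.

Hypotheses (hgrp : is_group G mul e inv) (hG : Def G)
  (hMG3 : Def (fun w : pt (n + n + n) => MG3 (lpart (lpart w)) (rpart (lpart w)) (rpart w)))
  (hT : Def T)
  (hGB2 : Def (fun z : pt (m + n) => GB2 (lpart z) (rpart z)))
  (hbase : is_open_base G T B)
  (hcpt : definably_compact G T B).

Lemma Ge : G e. Proof. by case: hgrp. Qed.

Lemma interior (phi : pt n -> pt n -> Prop) :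
  Def (fun w : pt (n + n) => phi (lpart w) (rpart w)) ->
  (forall y, G y -> exists U V, topen G T B U /\ topen G T B V /\ U e /\ V y /\
       forall x y', U x -> V y' -> phi x y') ->
  exists t, T t /\ B t e /\ forall x, B t x -> forall y, G y -> phi x y.
Proof.
move=> hphi hcont.
apply: NNPP => hno.
have hA : forall t, T t -> B t e -> exists x y, B t x /\ G y /\ ~ phi x y.
  move=> t Tt Bte; apply: NNPP => h; apply: hno; exists t; split=> //; split=> // x Bx y Gy.
  by apply: NNPP => hn; apply: h; exists x, y.
pose I := fun t => T t /\ B t e.
pose F := fun t y => G y /\ forall s, GB2 s y -> exists w, GB2 s w /\ G w /\
              exists x, GB2 t x /\ ~ phi x w.
have hdI : Def I.
  have h : Def (fun t : pt m => exists y, GB2 t y /\ forall i, y i = e i).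
    apply: Def_ex => /=; apply: Def_and.
      exact: hGB2.
    exact: Def_eqc.
  apply: (Def_ext h) => t; split.
    case=> y [[Tt Bty] hy]; have ey : y = e by exact: functional_extensionality.
    by split; rewrite // -ey.
  by case=> Tt Bte; exists e.
have hdF : Def (fun z : pt (m + n) => I (lpart z) /\ F (lpart z) (rpart z)).
  apply: Def_and; first exact: (Def_app1 _ hdI).
  rewrite /F /=; apply: Def_and; first exact: (Def_app1 _ hG).
  apply: Def_all => /=; apply: Def_impl.
    exact: (Def_app2 _ _ hGB2).
  apply: Def_ex => /=; apply: Def_and; first exact: (Def_app2 _ _ hGB2).
  apply: Def_and; first exact: (Def_app1 _ hG).
  apply: Def_ex => /=; apply: Def_and; first exact: (Def_app2 _ _ hGB2).
  apply: Def_not; exact: (Def_app2 _ _ hphi).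
have hclosed : forall i, I i -> tclosed G T B (F i).
  move=> i Ii; split; first by move=> x [].
  split; first by move=> x [].
  move=> x [Gx nF].
  have : ~ (forall s, GB2 s x -> exists w, GB2 s w /\ G w /\
              exists x0, GB2 i x0 /\ ~ phi x0 w).
    by move=> h; apply: nF.
  move=> /not_all_ex_not [s hs0].
  have [[Ts Bsx] hs] := imply_to_and _ _ hs0.
  exists s; split=> //; split=> // y Bsy; split; first exact: (proj1 hbase s y).
  by case=> _ /(_ s (conj Ts Bsy)).
have hne : forall i, I i -> exists x, F i x.
  move=> i [Ti Bie]; have [x [y [Bix [Gy nphi]]]] := hA i Ti Bie.
  exists y; split=> // s GBs; exists y; split=> //; split=> //.
  by exists x.
have hfilt : forall i j, I i -> I j -> exists l, I l /\ forall x, F l x -> F i x /\ F j x.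
  move=> i j [Ti Bie] [Tj Bje].
  have [u [Tu [Bue hu]]] := proj2 (proj2 hbase) i j e Ti Tj Bie Bje.
  exists u; split; first by [].
  move=> x [Gx hx]; split; split=> // s GBs; have [w [GBw [Gw [x0 [[_ Bux0] nphi]]]]] := hx s GBs;
    exists w; split=> //; split=> //; exists x0; split=> //; split=> //; by case: (hu x0 Bux0).
have [p hp] := hcpt (conj hdI hdF) hclosed hne hfilt.
have [t0 [Tt0 Bt0e]] := proj1 (proj2 hbase) e Ge.
have [Gp _] := hp t0 (conj Tt0 Bt0e).
have [U [V [oU [oV [Ue [Vp H]]]]]] := hcont p Gp.
have [t [Tt [Bte htU]]] := proj2 oU e Ue.
have [s [Ts [Bsp hsV]]] := proj2 oV p Vp.
have [_ hFt] := hp t (conj Tt Bte).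
have [w [[_ Bsw] [Gw [x [[_ Btx] nphi]]]]] := hFt s (conj Ts Bsp).
by apply: nphi; apply: H; [apply: htU | apply: hsV].
Qed.


Hypotheses
  (hmulc : forall x y W, G x -> G y -> topen G T B W -> W (mul x y) ->
     exists U V, topen G T B U /\ topen G T B V /\ U x /\ V y /\
       forall u v, U u -> V v -> W (mul u v))
  (hinvc : forall x W, G x -> topen G T B W -> W (inv x) ->
     exists U, topen G T B U /\ U x /\ forall u, U u -> W (inv u)).

Lemma Gmul x y : G x -> G y -> G (mul x y). Proof. by case: hgrp => _ [h _] /h; apply. Qed.
Lemma Ginv x : G x -> G (inv x). Proof. by case: hgrp => _ [_ [h _]] /h. Qed.
Lemma mulA x y z : G x -> G y -> G z -> mul x (mul y z) = mul (mul x y) z.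
Proof. by case: hgrp => _ [_ [_ [h _]]]; apply: h. Qed.
Lemma mul1 x : G x -> mul e x = x. Proof. by case: hgrp => _ [_ [_ [_ [h _]]]] /h []. Qed.
Lemma mulr1 x : G x -> mul x e = x. Proof. by case: hgrp => _ [_ [_ [_ [h _]]]] /h []. Qed.
Lemma mulV x : G x -> mul (inv x) x = e. Proof. by case: hgrp => _ [_ [_ [_ [_ h]]]] /h []. Qed.
Lemma mulVr x : G x -> mul x (inv x) = e. Proof. by case: hgrp => _ [_ [_ [_ [_ h]]]] /h []. Qed.

Ltac gg := repeat first [assumption | apply: Ge | apply: Gmul | apply: Ginv].

Lemma basic_open t : T t -> topen G T B (B t).
Proof.
move=> Tt; split; first by move=> x; apply: (proj1 hbase t).
move=> x Btx; have [u [Tu [Bux hu]]] := proj2 (proj2 hbase) t t x Tt Tt Btx Btx.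
by exists u; split=> //; split=> // y /hu [].
Qed.

Lemma topen_and U V : topen G T B U -> topen G T B V -> topen G T B (fun x => U x /\ V x).
Proof.
move=> [sU oU] [sV oV]; split; first by move=> x [/sU].
move=> x [Ux Vx]; have [s [Ts [Bsx hs]]] := oU x Ux; have [t [Tt [Btx ht]]] := oV x Vx.
have [u [Tu [Bux hu]]] := proj2 (proj2 hbase) s t x Ts Tt Bsx Btx.
by exists u; split=> //; split=> // y /hu [/hs ? /ht ?].
Qed.

Definition Sem (Y : pt n -> Prop) x := G x /\ forall a b, G a -> G b -> (Y (mul a b) <-> Y (mul (mul a x) b)).

Lemma Sem_normal Y : normal_subgroup G mul e inv (Sem Y).
Proof.
split; first by move=> x [].
split; first by split; [exact: Ge | move=> a b Ga Gb; rewrite mulr1].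
split.
  move=> x y [Gx hx] [Gy hy]; split; first by gg.
  move=> a b Ga Gb; rewrite (hx a b) //.
  rewrite (hy (mul a x) b) //; last by gg.
  by rewrite mulA.
split.
  move=> x [Gx hx]; split; first by gg.
  move=> a b Ga Gb; rewrite (hx (mul a (inv x)) b); try gg.
  by rewrite -(mulA Ga (Ginv Gx) Gx) (mulV Gx) (mulr1 Ga).
move=> g x Gg [Gx hx]; split; first by gg.
move=> a b Ga Gb.
have E1 : mul a b = mul (mul a g) (mul (inv g) b).
  by rewrite -(mulA Ga Gg (Gmul (Ginv Gg) Gb)) (mulA Gg (Ginv Gg) Gb) (mulVr Gg) (mul1 Gb).
have E2 : mul (mul a (mul (mul g x) (inv g))) b = mul (mul (mul a g) x) (mul (inv g) b).
  rewrite (mulA (Gmul (Gmul Ga Gg) Gx) (Ginv Gg) Gb).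
  by rewrite (mulA Ga (Gmul Gg Gx) (Ginv Gg)) (mulA Ga Gg Gx).
rewrite E1 E2; apply: hx; gg.
Qed.

Lemma disc_of_Y (Y : pt n -> Prop) : Def Y -> (forall x, Y x -> G x) ->
  topen G T B Y -> tclosed G T B Y -> (exists y0, Y y0) -> (exists z, G z /\ ~ Y z) ->
  definably_simple G mul e inv -> discrete G T B.
Proof.
move=> hY sY oY cY [y0 Yy0] [z [Gz nYz]] hsimple.
pose phi1 := fun x y => Y y <-> exists p, MG3 x y p /\ Y p.
have hphi1 : Def (fun w : pt (n + n) => phi1 (lpart w) (rpart w)).
  rewrite /phi1 /=; apply: Def_iff; first exact: (Def_app1 _ hY).
  apply: Def_ex => /=; apply: Def_and; first exact: (Def_app3 _ _ _ hMG3).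
  exact: (Def_app1 _ hY).
have phi1E : forall x y, G x -> G y -> (phi1 x y <-> (Y y <-> Y (mul x y))).
  move=> x y Gx Gy; rewrite /phi1; split.
    move=> h; split; first by move=> /h [p [[_ [_ ->]] ?]].
    by move=> hm; apply/h; exists (mul x y).
  move=> h; split; first by move=> /h hm; exists (mul x y).
  by case=> p [[_ [_ ->]] ?]; apply/h.
have [t1 [Tt1 [Bt1e ht1]]] : exists t, T t /\ B t e /\ forall x, B t x -> forall y, G y -> phi1 x y.
  apply: interior => // y Gy.
  case: (classic (Y y)) => Yy.
    have [U [V [oU [oV [Ue [Vy H]]]]]] := hmulc Ge Gy oY (eq_ind_r Y Yy (mul1 Gy)).
    exists U, V; split=> //; split=> //; split=> //; split=> // x y' Ux Vy'.
    have Gx := proj1 oU x Ux; have Gy' := proj1 oV y' Vy'.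
    apply/phi1E => //; have := H e y' Ue Vy'; rewrite mul1 // => Y1.
    by have := H x y' Ux Vy'.
  have oW := proj2 cY.
  have [U [V [oU [oV [Ue [Vy H]]]]]] := hmulc (W := fun x => G x /\ ~ Y x) Ge Gy oW
     (conj (eq_ind_r G Gy (mul1 Gy)) (eq_ind_r (fun v => ~ Y v) Yy (mul1 Gy))).
  exists U, V; split=> //; split=> //; split=> //; split=> // x y' Ux Vy'.
  have Gx := proj1 oU x Ux; have Gy' := proj1 oV y' Vy'.
  apply/phi1E => //; have := H e y' Ue Vy'; rewrite mul1 // => -[_ Y1].
  by have [_ Y2] := H x y' Ux Vy'; split.
pose phi2 := fun x a => forall b, G b -> ((exists p, MG3 a b p /\ Y p) <->
    (exists q, MG3 a x q /\ exists r, MG3 q b r /\ Y r)).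
have hphi2 : Def (fun w : pt (n + n) => phi2 (lpart w) (rpart w)).
  rewrite /phi2 /=; apply: Def_all => /=; apply: Def_impl; first exact: (Def_app1 _ hG).
  apply: Def_iff.
    apply: Def_ex => /=; apply: Def_and; first exact: (Def_app3 _ _ _ hMG3).
    exact: (Def_app1 _ hY).
  apply: Def_ex => /=; apply: Def_and; first exact: (Def_app3 _ _ _ hMG3).
  apply: Def_ex => /=; apply: Def_and; first exact: (Def_app3 _ _ _ hMG3).
  exact: (Def_app1 _ hY).
have phi2E : forall x a, G x -> G a -> (phi2 x a <->
    forall b, G b -> (Y (mul a b) <-> Y (mul (mul a x) b))).
  move=> x a Gx Ga; rewrite /phi2; split.
    move=> h b Gb; have := h b Gb; split.
      move=> Yab; have [] := (proj1 (h b Gb)); first by exists (mul a b).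
      by move=> q [[_ [_ ->]] [r [[_ [_ ->]] ?]]].
    move=> Yaxb; have [p [[_ [_ ->]] ?]] := proj2 (h b Gb) (ex_intro _ (mul a x) (conj (conj Ga (conj Gx erefl)) (ex_intro _ (mul (mul a x) b) (conj (conj (Gmul Ga Gx) (conj Gb erefl)) Yaxb)))).
    by [].
  move=> h b Gb; split.
    case=> p [[_ [_ ->]] Yp]; exists (mul a x); split; first by split=> //; split.
    exists (mul (mul a x) b); split; first by split; [gg | split].
    by apply/h.
  case=> q [[_ [_ ->]] [r [[_ [_ ->]] Yr]]]; exists (mul a b); split; first by split=> //; split.
  by apply/h.
have [t2 [Tt2 [Bt2e ht2]]] : exists t, T t /\ B t e /\ forall x, B t x -> forall a, G a -> phi2 x a.
  apply: interior => // a Ga.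
  have oW0 := basic_open Tt1.
  have [U1 [V1 [oU1 [oV1 [U1a [V1i H1]]]]]] := hmulc (W := B t1) (Gmul Ga Ge) (Ginv Ga) oW0
     (eq_ind_r (B t1) Bt1e (eq_trans (f_equal (fun u => mul u (inv a)) (mulr1 Ga)) (mulVr Ga))).
  have [U2 [V2 [oU2 [oV2 [U2a [V2e H2]]]]]] := hmulc Ga Ge oU1 U1a.
  have [U3 [oU3 [U3a H3]]] := hinvc Ga oV1 V1i.
  exists V2, (fun a' => U2 a' /\ U3 a'); split=> //; split; first exact: topen_and.
  split=> //; split=> // x a' V2x [U2a' U3a'].
  have Gx := proj1 oV2 x V2x; have Ga' := proj1 oU2 a' U2a'.
  have Bk := H1 _ _ (H2 _ _ U2a' V2x) (H3 _ U3a').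
  apply/phi2E => // b Gb.
  have := proj1 (phi1E _ _ (proj1 hbase _ _ Tt1 Bk) (Gmul Ga' Gb)) (ht1 _ Bk _ (Gmul Ga' Gb)).
  have E : mul (mul (mul a' x) (inv a')) (mul a' b) = mul (mul a' x) b.
    by rewrite -(mulA (Gmul Ga' Gx) (Ginv Ga') (Gmul Ga' Gb)) (mulA (Ginv Ga') Ga' Gb) (mulV Ga') (mul1 Gb).
  by rewrite -E.
pose Q := fun x => G x /\ forall a, G a -> phi2 x a.
have hQ : Def Q.
  apply: Def_and => //; apply: Def_all => /=; apply: Def_impl; first exact: (Def_app1 _ hG).
  exact: hphi2.
have QE : forall x, Q x <-> Sem Y x.
  move=> x; split.
    case=> Gx h; split=> // a b Ga Gb; exact: (proj1 (phi2E x a Gx Ga) (h a Ga)).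
  case=> Gx h; split=> // a Ga; apply/phi2E => // b Gb; exact: h.
have hN : normal_subgroup G mul e inv Q.
  have HS := Sem_normal Y.
  have -> : Q = Sem Y; last by [].
  apply: functional_extensionality => x; apply: propositional_extensionality; exact: QE.
case: (hsimple Q hQ hN) => [Qe|QG]; last first.
  exfalso; have [_ h] := proj1 (QE _) (QG _ (Gmul Gz (Ginv (sY _ Yy0)))).
  have Gy0 := sY _ Yy0.
  have := h e y0 Ge Gy0; rewrite (mul1 Gy0) (mul1 (Gmul Gz (Ginv Gy0))).
  rewrite -(mulA Gz (Ginv Gy0) Gy0) (mulV Gy0) (mulr1 Gz).
  by move=> [h1 _]; exact: nYz (h1 Yy0).
have oe : topen G T B (fun y => y = e).
  split; first by move=> y ->; exact: Ge.
  move=> y ->; exists t2; split=> //; split=> // x Bx; apply: Qe; split.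
    exact: (proj1 hbase t2 x).
  by move=> a Ga; apply: ht2.
move=> x Gx.
have [U [V [oU [oV [Ux [Vx H]]]]]] := hmulc (Ginv Gx) Gx oe (mulV Gx).
split; first by move=> y ->.
move=> y ->; have [s [Ts [Bsx hs]]] := proj2 oV x Vx.
exists s; split=> //; split=> // w Bsw.
have Vw := hs w Bsw; have Gw := proj1 oV w Vw.
have E := H _ _ Ux Vw.
by rewrite -(mul1 Gw) -(mulVr Gx) -(mulA Gx (Ginv Gx) Gw) E (mulr1 Gx).
Qed.

End Main.

Theorem theorem5p4 (M : expansion)
  (hloc : locally_o_minimal M) (hdc : definably_complete M)
  (n : nat) (G : ('I_n -> M) -> Prop) (mul : ('I_n -> M) -> ('I_n -> M) -> ('I_n -> M))
  (e : 'I_n -> M) (inv : ('I_n -> M) -> ('I_n -> M))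
  (m : nat) (T : ('I_m -> M) -> Prop) (B : ('I_m -> M) -> ('I_n -> M) -> Prop)
  (htg : def_top_group G mul e inv T B)
  (hsimple : definably_simple G mul e inv)
  (hreg : regular G T B) (hhaus : hausdorff G T B)
  (hcpt : definably_compact G T B) :
  discrete G T B \/ definably_connected G T B.
Proof.
case: htg => [[hgrp [hG hMG]] [[_ [[hT hGB] hbase]] [hmulc hinvc]]].
case: (classic (definably_connected G T B)) => hc; first by right.
left.
have [Y [hY [sY [oY [cY [ne1 ne2]]]]]] : exists Y, Def Y /\ (forall x, Y x -> G x) /\
   topen G T B Y /\ tclosed G T B Y /\ (exists y, Y y) /\ (exists z, G z /\ ~ Y z).
  apply: NNPP => hno; apply: hc => Y dY sY oY cY.
  case: (classic (exists y, Y y)) => hy; last by left => x Yx; apply: hy; exists x.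
  right => x Gx; apply: NNPP => nY; apply: hno; exists Y; do 5 (split=> //).
  by exists x.
exact: (@disc_of_Y M n m G mul e inv T B hgrp hG hMG hGB hbase hcpt hmulc hinvc Y hY sY oY cY ne1 ne2 hsimple).
Qed.
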